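(* There exists a finite constant $C=C(d)$ such that for any integer $\ell\ge2$ there exists a flow $\psi^\ell$ connecting $p_\ell$ to $p_{\ell-1}$, with support contained in $\Lambda_\ell$, such that $|\psi^\ell(x;b)|\le C\ell^{-d}$ for every $x\in\Lambda_\ell$ and every $b\in\mathcal B$.
   Context: $\mathcal B=\{e_1,\dots,e_d\}$ is the canonical basis of $\mathbb Z^d$; $\Lambda_\ell=\{0,1,\dots,\ell-1\}^d\subseteq\mathbb Z^d$; $p_\ell$ is the uniform probability measure on $\Lambda_\ell$. A flow is a function $\phi:\mathbb Z^d\times\mathcal B\to\mathbb R$; its support is contained in $\Lambda$ if $\phi(x;b)\ne0$ implies $\{x,x+b\}\subseteq\Lambda$. A flow $\phi$ connects $p$ to $q$ if $p(z)-q(z)=\sum_{b\in\mathcal B}(\phi(z;b)-\phi(z-b;b))$ for all $z\in\mathbb Z^d$. *)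

(* Defs.v *)
From mathcomp Require Import all_boot all_order all_algebra.
From mathcomp Require Import reals.
Set Implicit Arguments. Unset Strict Implicit. Unset Printing Implicit Defensive.
Import Order.TTheory GRing.Theory Num.Theory.
Local Open Scope ring_scope.

(* A point of Z^d is a function 'I_d -> int; a direction b in the canonical
   basis B = {e_1,...,e_d} is indexed by b : 'I_d. *)
Definition pt (d : nat) := 'I_d -> int.

Definition shift_pos (d : nat) (x : pt d) (b : 'I_d) : pt d :=
  fun i => x i + (i == b)%:R.
Definition shift_neg (d : nat) (x : pt d) (b : 'I_d) : pt d :=
  fun i => x i - (i == b)%:R.

Definition in_box (d l : nat) (x : pt d) : bool :=
  [forall i, (0 <= x i) && (x i < l%:Z)].

Definition unif (R : realType) (d l : nat) (z : pt d) : R :=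
  if in_box l z then (l%:R ^+ d)^-1 else 0.

Definition flow (R : realType) (d : nat) := pt d -> 'I_d -> R.

Definition flow_supported_in (R : realType) (d l : nat) (phi : flow R d) : Prop :=
  forall x b, phi x b != 0 -> in_box l x && in_box l (shift_pos x b).

Definition connects (R : realType) (d : nat) (phi : flow R d) (p q : pt d -> R) : Prop :=
  forall z, p z - q z = \sum_(b < d) (phi z b - phi (shift_neg z b) b).

(* Main.v *)
Require Import Defs.
From mathcomp Require Import all_boot all_order all_algebra.
From mathcomp Require Import reals zify ring lra.
Import Order.TTheory GRing.Theory Num.Theory.
Local Open Scope ring_scope.

Section G1.
Variable R : realType.
Variable d : nat.

Definition u (m : nat) (t : int) : R :=
  if (0 <= t) && (t < m%:Z) then (m%:R)^-1 else 0.
Definition F (m : nat) (t : int) : R :=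
  if t < 0 then 0 else if t < m%:Z then (t + 1)%:~R / m%:R else 1.

Lemma Fdiff m t : (0 < m)%N -> F m t - F m (t - 1) = u m t.
Proof.
move=> m0; rewrite /F /u.
have mR : (m%:R : R) != 0 by rewrite pnatr_eq0 -lt0n.
have [h|[h|[h|[h|h]]]] : t < 0 \/ t = 0 \/ (0 < t /\ t < m%:Z) \/ t = m%:Z \/ m%:Z < t by lia.
- have -> : (t - 1 < 0) = true by lia.
  rewrite h. have -> : (0 <= t) = false by lia. by rewrite subr0.
- rewrite h /=. have -> : (0 < m%:Z) = true by lia.
  by rewrite subr0 /= mul1r.
- case: h => h1 h2.
  have -> : (t < 0) = false by lia.
  have -> : (t - 1 < 0) = false by lia.
  have -> : (t - 1 < m%:Z) = true by lia.
  have -> : (0 <= t) = true by lia.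
  rewrite h2 /= subrK intrD -mulrBl. by rewrite addrAC subrr add0r mul1r.
- rewrite h. have -> : (m%:Z < 0) = false by lia.
  have -> : (m%:Z - 1 < 0) = false by lia.
  have -> : (m%:Z - 1 < m%:Z) = true by lia.
  rewrite ltxx andbF subrK /=. by rewrite divff // subrr.
- have -> : (t < 0) = false by lia.
  have -> : (t - 1 < 0) = false by lia.
  have -> : (t - 1 < m%:Z) = false by lia.
  have -> : (t < m%:Z) = false by lia.
  by rewrite andbF subrr.
Qed.


Definition H (l m i k : nat) (t : int) : R := if (i < k)%N then u m t else u l t.
Definition q (l m k : nat) (z : pt d) : R := \prod_(i < d) H l m i k (z i).
Definition psi (l m : nat) : flow R d := fun z b =>
  (\prod_(i < d | i != b) H l m i b (z i)) * (F l (z b) - F m (z b)).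

Lemma prod_u m (z : pt d) : \prod_(i < d) u m (z i) = @unif R d m z.
Proof.
rewrite /unif /in_box; case: (boolP [forall i, _]) => [/forallP H0|].
  rewrite (eq_bigr (fun _ => (m%:R)^-1)); last by move=> i _; rewrite /u H0.
  by rewrite prodr_const card_ord exprVn.
rewrite negb_forall => /existsP [i Hi].
by rewrite (bigD1 i) //= /u (negbTE Hi) mul0r.
Qed.

Lemma div_psi l m (z : pt d) (b : 'I_d) : (0 < l)%N -> (0 < m)%N ->
  psi l m z b - psi l m (shift_neg z b) b = q l m b z - q l m b.+1 z.
Proof.
move=> l0 m0; rewrite /psi /q.
have E k : \prod_(i < d) H l m i k (z i) =
   H l m b k (z b) * \prod_(i < d | i != b) H l m i k (z i) by rewrite (bigD1 b).
rewrite !E.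
have -> : \prod_(i < d | i != b) H l m i b (shift_neg z b i)
        = \prod_(i < d | i != b) H l m i b (z i).
  by apply: eq_bigr => i ib; rewrite /shift_neg (negbTE ib) subr0.
have -> : \prod_(i < d | i != b) H l m i b.+1 (z i)
        = \prod_(i < d | i != b) H l m i b (z i).
  apply: eq_bigr => i ib; rewrite /H.
  have ib2 : (nat_of_ord i == nat_of_ord b) = false by apply/negbTE.
  by rewrite ltnS leq_eqVlt ib2.
have -> : shift_neg z b b = z b - 1 by rewrite /shift_neg eqxx.
rewrite /H ltnn ltnSn.
set P := \prod_(_ < _ | _) _.
rewrite -mulrBr (mulrC _ P) (mulrC _ P) -mulrBr; congr (_ * _).
rewrite -(Fdiff l (z b) l0) -(Fdiff m (z b) m0).
by ring.
Qed.


Lemma conn l m : (0 < l)%N -> (0 < m)%N ->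
  connects (psi l m) (@unif R d l) (@unif R d m).
Proof.
move=> l0 m0 z.
rewrite (eq_bigr (fun b : 'I_d => q l m b z - q l m b.+1 z)); last first.
  by move=> b _; rewrite div_psi.
rewrite -(big_mkord xpredT (fun b => q l m b z - q l m b.+1 z)).
have -> : \sum_(0 <= b < d) (q l m b z - q l m b.+1 z)
        = - \sum_(0 <= b < d) (q l m b.+1 z - q l m b z).
  by rewrite -sumrN; apply: eq_bigr => b _; rewrite opprB.
rewrite telescope_sumr // opprB /q -!prod_u.
congr (_ - _); apply: eq_bigr => i _; rewrite /H //.
by rewrite ltn_ord.
Qed.

Lemma u_nz m t : u m t != 0 -> (0 <= t) && (t < m%:Z).
Proof. by rewrite /u; case: ifP => // _; rewrite eqxx. Qed.

Lemma f_nz m t : F m.+1 t - F m t != 0 -> (0 <= t) && (t < m%:Z).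
Proof.
rewrite /F.
have [h|[h|h]] : t < 0 \/ (0 <= t /\ t < m%:Z) \/ m%:Z <= t by lia.
- by rewrite h subrr eqxx.
- by case: h => -> ->.
have -> : (t < 0) = false by lia.
have -> : (t < m%:Z) = false by lia.
have [e|e] : t = m%:Z \/ m%:Z < t by lia.
  rewrite e. have -> : (m%:Z < m.+1%:Z) = true by lia.
  have -> : (m%:Z + 1)%:~R = (m.+1%:R : R) by rewrite intrD mulrSr.
  by rewrite divff ?pnatr_eq0 // subrr eqxx.
have -> : (t < m.+1%:Z) = false by lia.
by rewrite subrr eqxx.
Qed.

Lemma f_bound m t : (0 < m)%N -> `|F m.+1 t - F m t| <= (m%:R : R)^-1.
Proof.
move=> m0.
have Mp : 0 < (m%:R : R) by rewrite ltr0n.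
case: (boolP ((0 <= t) && (t < m%:Z))) => h; last first.
  have : ~~ (F m.+1 t - F m t != 0) by apply: contra h; exact: f_nz.
  by rewrite negbK => /eqP ->; rewrite normr0 invr_ge0 ler0n.
move/andP: h => [h1 h2].
rewrite /F.
have -> : (t < 0) = false by lia.
have -> : (t < m%:Z) = true by lia.
have -> : (t < m.+1%:Z) = true by lia.
have T0 : 0 <= ((t + 1)%:~R : R) by rewrite ler0z; lia.
have Tm : ((t + 1)%:~R : R) <= m%:R.
  have -> : (m%:R : R) = (m%:Z)%:~R by []. rewrite ler_int. lia.
set T := ((t + 1)%:~R : R).
rewrite mulrSr.
set M := (m%:R : R).
have e : T / (M + 1) - T / M = - (T / (M * (M + 1))).
  field. apply/andP; split; lra.
rewrite e normrN ger0_norm; last first.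
  apply: divr_ge0 => //; apply: mulr_ge0; lra.
rewrite ler_pdivrMr; last by apply: mulr_gt0; lra.
rewrite mulrA mulVf; last by lra.
lra.
Qed.


Lemma u_z k t : ~~ ((0 <= t) && (t < k%:Z)) -> u k t = 0.
Proof. by rewrite /u => /negbTE ->. Qed.

Lemma supp m : flow_supported_in m.+1 (psi m.+1 m).
Proof.
move=> z b; rewrite /psi mulf_eq0 negb_or => /andP [hP hf].
have hb := f_nz _ _ hf.
have hi i : i != b -> (0 <= z i) && (z i < m.+1%:Z).
  move=> ib; apply: contraR hP => hn.
  have h1 : ~~ ((0 <= z i) && (z i < m%:Z)) by apply: contra hn; lia.
  by rewrite (bigD1 i) //= /H u_z // u_z // if_same mul0r.
apply/andP; split; apply/forallP => i; case: (eqVneq i b) => [->|ib].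
- move: hb; lia.
- exact: hi.
- rewrite /shift_pos eqxx; move: hb; lia.
- by rewrite /shift_pos (negbTE ib) addr0; apply: hi.
Qed.

Lemma bnd m (z : pt d) b : (0 < m)%N -> `|psi m.+1 m z b| <= ((m%:R : R)^-1) ^+ d.
Proof.
move=> m0.
have Mp : 0 < (m%:R : R) by rewrite ltr0n.
have Hb i k t : `|H m.+1 m i k t| <= (m%:R : R)^-1.
  have ub k' : (m <= k')%N -> `|u k' t| <= (m%:R : R)^-1.
    move=> mk; rewrite /u; case: ifP => _; last by rewrite normr0 invr_ge0 ler0n.
    rewrite ger0_norm ?invr_ge0 ?ler0n //.
    rewrite lef_pV2 ?posrE ?ler_nat // ltr0n; lia.
  by rewrite /H; case: ifP => _; apply: ub.
rewrite /psi normrM normr_prod.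
have -> : ((m%:R : R)^-1) ^+ d = (\prod_(i < d | i != b) (m%:R : R)^-1) * (m%:R)^-1.
  have <- : \prod_(i < d) (m%:R : R)^-1 = ((m%:R : R)^-1) ^+ d by rewrite prodr_const card_ord.
  by rewrite (bigD1 b) //= mulrC.
apply: ler_pM.
- by apply: prodr_ge0 => i _.
- by [].
- by apply: ler_prod => i _; rewrite normr_ge0 Hb.
- exact: f_bound.
Qed.

End G1.

Theorem lemmaG1 (R : realType) (d : nat) :
  exists C : R, forall l : nat, (2 <= l)%N ->
    exists psi : flow R d,
      connects psi (@unif R d l) (@unif R d l.-1) /\
      flow_supported_in l psi /\
      (forall x (b : 'I_d), in_box l x -> `|psi x b| <= C * (l%:R ^+ d)^-1).
Proof.
exists (2 ^+ d); case=> [|[|m]] // _.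
exists (psi R d m.+2 m.+1); split; first exact: conn.
split; first exact: supp.
move=> x b _; apply: le_trans (bnd _ _ m.+1 x b _) _ => //.
rewrite -exprVn -exprMn; apply: lerXn2r.
- by rewrite nnegrE invr_ge0 ler0n.
- by rewrite nnegrE mulr_ge0 // invr_ge0 ler0n.
rewrite ler_pdivlMr ?ltr0n // mulrC ler_pdivrMr ?ltr0n //.
rewrite -natrM ler_nat; lia.
Qed.
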